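(* Let $q\ge0$, let $s_0<s_1<\dots<s_q$ be distinct nodes in $[0,1]$ with $s_q=1$, and let $\{\lambda_n^{[q]}\}_{n=0}^q$ be the corresponding Lagrange basis of $\mathcal{P}^q([0,1])$. Define, for $m,n=0,\dots,q$, $$a_{mn}=\int_0^1\dot\lambda_n^{[q]}(t)\lambda_m^{[q]}(t)\,dt+\lambda_n^{[q]}(0)\lambda_m^{[q]}(0),$$ let $A=(a_{mn})_{m,n=0}^q$ (which is invertible) and $\bar A=(\bar a_{mn})=A^{-1}$. Then for every $m=0,\dots,q$, $$\sum_{n=0}^q\bar a_{mn}\lambda_n^{[q]}(0)=1.$$
   Context: $\mathcal{P}^q([0,1])$ is the space of polynomials of degree $\le q$ on $[0,1]$; the Lagrange basis for nodes $s_0,\dots,s_q$ is $\lambda_n(s)=\prod_{l\ne n}(s-s_l)/(s_n-s_l)$. *)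

(* Defs.v *)
From HB Require Import structures.
From mathcomp Require Import all_boot all_order all_algebra.
From mathcomp Require Import all_classical all_reals all_analysis.
Set Implicit Arguments. Unset Strict Implicit. Unset Printing Implicit Defensive.
Import Order.TTheory GRing.Theory Num.Theory.
Local Open Scope ring_scope.

Definition lagrange_basis (R : fieldType) (q : nat) (s : 'I_q.+1 -> R)
  (n : 'I_q.+1) : {poly R} :=
  \prod_(l < q.+1 | l != n) (('X - (s l)%:P) * ((s n - s l)^-1)%:P).

Definition matA (R : realType) (q : nat) (s : 'I_q.+1 -> R) : 'M[R]_q.+1 :=
  \matrix_(m < q.+1, n < q.+1)
    (Rintegral (@lebesgue_measure R) `[0, 1]%classic
       (fun t => ((lagrange_basis s n)^`()).[t] * (lagrange_basis s m).[t])
     + (lagrange_basis s n).[0] * (lagrange_basis s m).[0]).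

(* Main.v *)
Require Import Defs.
From HB Require Import structures.
From mathcomp Require Import all_boot all_order all_algebra.
From mathcomp Require Import all_classical all_reals all_analysis.
From mathcomp Require Import zify ring lra.
Import Order.TTheory GRing.Theory Num.Theory.
Import numFieldNormedType.Exports.
Local Open Scope ring_scope.

Section S.
Context {R : realType}.
Notation mu := (@lebesgue_measure R).
Definition II (p : {poly R}) : R := Rintegral mu `[0, 1]%classic (fun t => p.[t]).

Lemma II_int (p : {poly R}) : mu.-integrable `[0, 1]%classic (EFin \o horner p).
Proof.
apply: continuous_compact_integrable; first exact: segment_compact.
apply: continuous_subspaceT => x; exact: continuous_horner.
Qed.

Lemma IID p r : II (p + r) = II p + II r.
Proof.
rewrite /II -RintegralD //; last exact: II_int.
  by apply: eq_Rintegral => x _; rewrite hornerD.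
exact: II_int.
Qed.

Lemma IIZ c p : II (c *: p) = c * II p.
Proof.
rewrite /II -RintegralZl //; last exact: II_int.
by apply: eq_Rintegral => x _; rewrite hornerZ.
Qed.

Lemma II0 : II 0 = 0.
Proof. by rewrite -(scale0r (0 : {poly R})) IIZ mul0r. Qed.

Lemma II_sum k (F : 'I_k -> {poly R}) : II (\sum_i F i) = \sum_i II (F i).
Proof.
apply: (big_ind2 (fun a b => II a = b)) => //; first exact: II0.
by move=> a1 b1 a2 b2 <- <-; rewrite IID.
Qed.

Lemma FTC p : II p^`() = p.[1] - p.[0].
Proof.
rewrite /II /Rintegral (@continuous_FTC2 R (horner p^`()) (horner p) 0 1) //.
- have h : continuous (fun x : R => p^`().[x]) := @continuous_horner R _.
  exact: continuous_subspaceT h.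
- split.
  + move=> x _; exact: derivable_horner.
  + apply: cvg_at_right_filter; exact: continuous_horner.
  + apply: cvg_at_left_filter; exact: continuous_horner.
- by move=> x _; rewrite -derivE.
Qed.

Definition prim (p : {poly R}) : {poly R} :=
  \poly_(i < (size p).+1) (if i is j.+1 then p`_j / j.+1%:R else 0).

Lemma deriv_prim p : (prim p)^`() = p.
Proof.
apply/polyP => i; rewrite coef_deriv coef_poly /=.
case: ltnP => [hi|hi].
  by rewrite -[_ *+ i.+1]mulr_natr divfK // pnatr_eq0.
by rewrite mul0rn nth_default.
Qed.

Lemma vanish01 (p : {poly R}) : (forall x, 0 <= x <= 1 -> p.[x] = 0) -> p = 0.
Proof.
move=> H; set n := size p.
have [n0|npos] := posnP n; first by apply/eqP; rewrite -size_poly_eq0 -/n n0.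
have hn : (n%:R : R) != 0 by rewrite pnatr_eq0 -lt0n.
apply: (@roots_geq_poly_eq0 _ p [seq (k%:R / n%:R : R) | k <- iota 0 n]).
- apply/allP => x /mapP [k]; rewrite mem_iota add0n => /andP[_ kn] ->.
  apply/eqP; apply: H; rewrite divr_ge0 ?ler0n //=.
  by rewrite ler_pdivrMr ?ltr0n // mul1r ler_nat ltnW.
- rewrite map_inj_in_uniq ?iota_uniq // => a b _ _ /(mulIf (invr_neq0 hn)).
  by move/eqP; rewrite eqr_nat => /eqP.
- by rewrite size_map size_iota.
Qed.

Lemma II_sq0 (w : {poly R}) : II (w * w) = 0 -> w = 0.
Proof.
move=> H; set W := prim (w * w).
have hd : forall x, (horner W)^`()%classic x = (w * w).[x].
  by move=> x; rewrite -derivE deriv_prim.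
have h01 : W.[1] = W.[0].
  by apply/eqP; rewrite -subr_eq0 -FTC deriv_prim H.
have cW : {within `[0, 1], continuous (horner W)}%classic.
  have h : continuous (fun x : R => W.[x]) := @continuous_horner R _.
  exact: continuous_subspaceT h.
have d1 : forall x, x \in `]0, 1[%R -> derivable (horner W) x 1.
  by move=> x _; exact: derivable_horner.
have d2 : forall x, x \in `]0, 1[%R -> 0 <= (horner W)^`()%classic x.
  by move=> x _; rewrite hd hornerM -expr2; exact: sqr_ge0.
have mono := @ger0_derive1_ndecr R (horner W) 0 1 d1 d2 cW.
have cst : W - (W.[0])%:P = 0.
  apply: vanish01 => x /andP[x0 x1].
  rewrite hornerD hornerN hornerC; apply/eqP; rewrite subr_eq0 eq_le.
  rewrite -{1}h01 (mono x 1) ?lexx ?(mono 0 x) ?lexx //.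
have : (W - (W.[0])%:P)^`() = 0 by rewrite cst deriv0.
rewrite derivB derivC subr0 deriv_prim => /eqP.
by rewrite mulf_eq0 orbb => /eqP.
Qed.
End S.

Section L.
Context {R : realType} (q : nat) (s : 'I_q.+1 -> R) (sinj : injective s).
Notation L := (lagrange_basis s).

Lemma lag_node n k : (L n).[s k] = (n == k)%:R.
Proof.
rewrite /lagrange_basis horner_prod; case: (eqVneq n k) => [<-|nk].
  apply: big1 => l ln; rewrite hornerM hornerXsubC hornerC mulfV //.
  by rewrite subr_eq0; apply: contra ln => /eqP /sinj ->.
rewrite (bigD1 k) 1?eq_sym //= hornerM hornerXsubC subrr !mul0r //.
Qed.

Lemma size_lag n : (size (L n) <= q.+1)%N.
Proof.
have nz : forall l, l != n -> ('X - (s l)%:P) * ((s n - s l)^-1)%:P != 0.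
  move=> l ln; rewrite mulf_neq0 ?polyXsubC_eq0 // polyC_eq0 invr_eq0 subr_eq0.
  by apply: contra ln => /eqP /sinj ->.
rewrite /lagrange_basis size_prod //.
rewrite (eq_bigr (fun _ => 2%N)); last first.
  move=> l ln; rewrite size_mul ?nz // ?polyXsubC_eq0 //; last first.
    by rewrite polyC_eq0 invr_eq0 subr_eq0; apply: contra ln => /eqP /sinj ->.
  rewrite size_XsubC size_polyC invr_eq0 subr_eq0.
  by have -> : (s n == s l) = false by apply/negbTE; apply: contra ln => /eqP /sinj ->.
rewrite sum_nat_const.
have : (#|(fun l : 'I_q.+1 => l != n)| <= q)%N.
  have e := cardC1 n; rewrite card_ord /= in e.
  apply: (@leq_trans #|predC1 n|); last by rewrite e.
  by apply: eq_leq; apply: eq_card => x; rewrite !inE.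
by move=> h; rewrite muln2 -addnn -addSn addnK ltnS.
Qed.

Lemma sum_node (c : 'I_q.+1 -> R) k : \sum_n c n * (L n).[s k] = c k.
Proof.
rewrite (bigD1 k) //= lag_node eqxx mulr1 big1 ?addr0 // => n nk.
by rewrite lag_node (negbTE nk) mulr0.
Qed.

Lemma size_combo (c : 'I_q.+1 -> R) : (size (\sum_n c n *: L n)%R <= q.+1)%N.
Proof.
apply: (big_ind (fun p : {poly R} => size p <= q.+1)%N) => //.
- by rewrite size_poly0.
- by move=> x y hx hy; rewrite (leq_trans (size_polyD _ _)) // geq_max hx hy.
- by move=> n _; rewrite (leq_trans (size_scale_leq _ _)) // size_lag.
Qed.

Lemma interp (p : {poly R}) : (size p <= q.+1)%N -> p = \sum_m p.[s m] *: L m.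
Proof.
move=> hp; apply/eqP; rewrite -subr_eq0; apply/eqP.
apply: (@roots_geq_poly_eq0 _ _ [seq s i | i <- enum 'I_q.+1]).
- apply/allP => x /mapP [k _ ->]; rewrite rootE hornerD hornerN horner_sum.
  under eq_bigr do rewrite hornerZ.
  by rewrite sum_node subrr.
- by rewrite map_inj_uniq // enum_uniq.
- rewrite size_map size_enum_ord (leq_trans (size_polyD _ _)) // geq_max hp.
  by rewrite size_polyN size_combo.
Qed.
End L.

Theorem lemmaA2 (R : realType) (q : nat) (s : 'I_q.+1 -> R)
  (s_incr : forall i j : 'I_q.+1, (i < j)%N -> s i < s j)
  (s_in01 : forall i : 'I_q.+1, 0 <= s i <= 1)
  (s_last : s ord_max = 1) :
  matA s \in unitmx /\
  forall m : 'I_q.+1,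
    \sum_(n < q.+1) (invmx (matA s)) m n * (lagrange_basis s n).[0] = 1.
Proof.
have sinj : injective s.
  move=> i j e; case: (ltngtP i j) => [ij|ji|/val_inj //].
    by have := s_incr _ _ ij; rewrite e ltxx.
  by have := s_incr _ _ ji; rewrite e ltxx.
set L := lagrange_basis s.
pose Bf (u v : {poly R}) := II (u^`() * v) + u.[0] * v.[0].
have Aent : forall m n, matA s m n = Bf (L n) (L m).
  move=> m n; rewrite mxE /Bf; congr (_ + _).
  by rewrite /II; apply: eq_Rintegral => t _; rewrite hornerM.
have Bleft : forall (c : 'I_q.+1 -> R) v,
    Bf (\sum_n c n *: L n) v = \sum_n c n * Bf (L n) v.
  move=> c v; rewrite /Bf raddf_sum mulr_suml II_sum horner_sum mulr_suml.
  rewrite -big_split; apply: eq_bigr => n _ /=.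
  by rewrite derivZ -scalerAl IIZ hornerZ mulrDr mulrA.
have Bright : forall u (c : 'I_q.+1 -> R),
    Bf u (\sum_m c m *: L m) = \sum_m c m * Bf u (L m).
  move=> u c; rewrite /Bf mulr_sumr II_sum horner_sum mulr_sumr.
  rewrite -big_split; apply: eq_bigr => n _ /=.
  by rewrite -scalerAr IIZ hornerZ mulrDr mulrCA.
have sumL : \sum_n L n = 1.
  rewrite [RHS](@interp R q s sinj 1) ?size_poly1 //.
  by apply: eq_bigr => n _; rewrite hornerC scale1r.
have unit : matA s \in unitmx.
  rewrite -unitmx_tr -row_free_unit -kermx_eq0; apply/eqP/row_matrixP => i.
  rewrite row0; set c := row i _.
  have hc : c *m (matA s)^T = 0 by rewrite -row_mul mulmx_ker row0.
  pose u := \sum_n c 0 n *: L n.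
  have hB : forall m, Bf u (L m) = 0.
    move=> m; have := congr1 (fun M : 'M[R]_(1, q.+1) => M 0 m) hc; rewrite !mxE => <-.
    rewrite /u Bleft; apply: eq_bigr => n _.
    by rewrite (_ : (matA s)^T n m = matA s m n) ?Aent // mxE.
  have hv : forall v : {poly R}, (size v <= q.+1)%N -> Bf u v = 0.
    move=> v sv; rewrite (@interp R q s sinj v sv) Bright big1 // => m _.
    by rewrite hB mulr0.
  have su : (size u <= q.+1)%N by apply: size_combo.
  have u0 : u.[0] = 0.
    have h := hv u su; rewrite /Bf in h.
    have e2 : II (u^`() * u) + II (u^`() * u) = u.[1] * u.[1] - u.[0] * u.[0].
      by rewrite -IID -[X in _ + X]mulrC -derivM FTC !hornerM.
    have hs : u.[0] * u.[0] + u.[1] * u.[1] = 0 by nra.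
    move/eqP: hs; rewrite paddr_eq0 -?expr2 ?sqr_ge0 // => /andP[].
    by rewrite sqrf_eq0 => /eqP.
  have du : u^`() = 0.
    apply: II_sq0.
    have sd : (size u^`() <= q.+1)%N.
      have [->|nz] := eqVneq u 0; first by rewrite deriv0 size_poly0.
      by rewrite (leq_trans (ltnW (lt_size_deriv nz))).
    by have := hv _ sd; rewrite /Bf u0 mul0r addr0.
  have uz : u = 0.
    apply/polyP => k; rewrite coef0; case: k => [|k].
      by rewrite -horner_coef0 u0.
    have := congr1 (fun p : {poly R} => p`_k) du; rewrite coef_deriv coef0.
    by move/eqP; rewrite mulrn_eq0 /= => /eqP.
  apply/rowP => k; rewrite [in RHS]mxE.
  have := @sum_node R q s sinj (fun n => c 0 n) k.
  under eq_bigr do rewrite -hornerZ.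
  by rewrite -horner_sum -/u uz horner0 => <-.
split => // m.
have hsum : forall n, \sum_k matA s n k = (L n).[0].
  move=> n; under eq_bigr do rewrite Aent.
  transitivity (Bf (\sum_k 1 *: L k) (L n)).
    by rewrite Bleft; apply: eq_bigr => k _; rewrite mul1r.
  under eq_bigr do rewrite scale1r.
  rewrite sumL /Bf derivC mul0r II0 add0r hornerC mul1r //.
under eq_bigr do rewrite -hsum mulr_sumr.
rewrite exchange_big /=.
have : \sum_k (invmx (matA s) *m matA s) m k = 1.
  rewrite mulVmx // (bigD1 m) //= big1 => [|k km]; first by rewrite !mxE eqxx addr0.
  by rewrite !mxE eq_sym (negbTE km).
move=> <-; apply: eq_bigr => k _; rewrite mxE //.
Qed.
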